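(* Let $A\in \mathbb{R}^{m\times n}$ and $b\in \mathbb{R}^m$ with $m<n$. Suppose that the linear system $Ax=b$ is consistent and has a solution $x_*$. Suppose there are index sets $\mathbb{I}_1\subseteq\{1,\dots,m\}$ and $\mathbb{I}_2\subseteq\{1,\dots,n\}$ with $\operatorname{card}(\mathbb{I}_1)=\operatorname{card}(\mathbb{I}_2)=\operatorname{rank}(A)$ such that the submatrix $A_{(\mathbb{I}_1,\mathbb{I}_2)}$ is nonsingular and the subvector $x_{*\mathbb{I}_2}$ has no zero entry. Let $\mathbb{I}_2^{c}=\{1,\dots,n\}\setminus\mathbb{I}_2$. (a) If not all entries of $x_{*\mathbb{I}_2^{c}}$ are $0$, then $Ax=b$ has infinitely many solutions with the same sign pattern as $x_*$. (b) $Ax=b$ has infinitely many solutions $x$ such that $x_{\mathbb{I}_2}$ has the same sign pattern as $x_{*\mathbb{I}_2}$. (c) If $x_{*\mathbb{I}_2^{c}}=0$, then $Ax=b$ has no solution other than $x_*$ with the same sign pattern as $x_*$.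
   Context: For a matrix $X$ and index sets $\mathbb{I}_1,\mathbb{I}_2$, $X_{(\mathbb{I}_1,\mathbb{I}_2)}$ is the submatrix consisting of the entries $X_{(i,j)}$ with $i\in\mathbb{I}_1$, $j\in\mathbb{I}_2$; for a vector $x$, $x_{\mathbb{I}}$ is the subvector of entries $x_{(i)}$, $i\in\mathbb{I}$. $\operatorname{card}$ denotes cardinality. The sign function is $\operatorname{sign}(r)=1,0,-1$ for $r>0$, $r=0$, $r<0$. A vector $x$ has the sign pattern $s\in\{-1,0,1\}^n$ if $\operatorname{sign}(x_{(i)})=s_{(i)}$ for all $i$; two vectors have the same sign pattern if their entrywise signs agree. *)

(* Defs.v *)
From HB Require Import structures.
From mathcomp Require Import all_boot all_order all_algebra.
Set Implicit Arguments. Unset Strict Implicit. Unset Printing Implicit Defensive.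
Import Order.TTheory GRing.Theory Num.Theory.
Local Open Scope ring_scope.

(* The square submatrix A_(I1, I2), rows/columns listed in increasing order;
   requires card I2 = card I1 (given by h). *)
Definition subsq (R : Type) (m n : nat) (A : 'M[R]_(m, n))
  (I1 : {set 'I_m}) (I2 : {set 'I_n}) (h : #|I2| = #|I1|) : 'M[R]_#|I1| :=
  \matrix_(i < #|I1|, j < #|I1|) A (enum_val i) (enum_val (cast_ord (esym h) j)).

Definition same_sign (R : numDomainType) (n : nat) (x y : 'cV[R]_n) : Prop :=
  forall i : 'I_n, Num.sg (x i 0) = Num.sg (y i 0).

Definition same_sign_on (R : numDomainType) (n : nat) (I : {set 'I_n})
  (x y : 'cV[R]_n) : Prop :=
  forall i : 'I_n, i \in I -> Num.sg (x i 0) = Num.sg (y i 0).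

Definition infinitely_many (T : eqType) (P : T -> Prop) : Prop :=
  forall s : seq T, exists x, P x /\ x \notin s.

(* Main.v *)
Require Import Defs.
From HB Require Import structures.
From mathcomp Require Import all_boot all_order all_algebra.
From mathcomp Require Import lra.
Import Order.TTheory GRing.Theory Num.Theory.
Local Open Scope ring_scope.
Lemma finite_small (R : realFieldType) (T : eqType) (P : T -> R -> Prop)
  (s : seq T) :
  (forall x (e e' : R), 0 < e' -> e' <= e -> P x e -> P x e') ->
  (forall x, x \in s -> exists2 e : R, 0 < e & P x e) ->
  exists2 e : R, 0 < e & forall x, x \in s -> P x e.
Proof.
move=> Pm; elim: s => [|y s IH] H; first by exists 1 => //.
have [e1 e1p He1] := H y (mem_head _ _).
have [|e2 e2p He2] := IH.
  by move=> x xs; apply: H; rewrite in_cons xs orbT.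
exists (Num.min e1 e2); first by rewrite lt_min e1p e2p.
move=> x; rewrite in_cons => /orP[/eqP->|xs].
  by apply: (Pm _ e1); [rewrite lt_min e1p e2p | rewrite ge_min lexx | exact: He1].
by apply: (Pm _ e2); [rewrite lt_min e1p e2p | rewrite ge_min lexx orbT | exact: He2].
Qed.

Lemma sg_pert (R : realFieldType) (x d : R) :
  x != 0 -> `|d| < `|x| -> Num.sg (x + d) = Num.sg x.
Proof.
move=> xn0 hd.
have [hx|hx|hx] := ltrgtP 0 x; last by rewrite hx eqxx in xn0.
- rewrite (gtr0_sg hx) gtr0_sg //.
  move: hd; rewrite (gtr0_norm hx).
  have [hv|hv] := lerP 0 d; [rewrite ger0_norm // | rewrite ltr0_norm //]; lra.
- rewrite (ltr0_sg hx) ltr0_sg //.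
  move: hd; rewrite (ltr0_norm hx).
  have [hv|hv] := lerP 0 d; [rewrite ger0_norm // | rewrite ltr0_norm //]; lra.
Qed.

Lemma perturb (R : realFieldType) n (xs v : 'cV[R]_n) (j : 'I_n) :
  v j 0 = 1 -> forall s : seq 'cV[R]_n, exists t : R,
   [/\ 0 < t, xs + t *: v \notin s &
    forall k, xs k 0 != 0 -> Num.sg ((xs + t *: v) k 0) = Num.sg (xs k 0)].
Proof.
move=> vj s.
have [e1 e1p He1] : exists2 e : R, 0 < e & forall k, k \in enum 'I_n ->
   e * `|v k 0| < `|xs k 0| \/ xs k 0 = 0.
  apply: (@finite_small R _
   (fun k e => e * `|v k 0| < `|xs k 0| \/ xs k 0 = 0) (enum 'I_n)).
- move=> k e e' e'p e'e [h|h]; last by right.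
  left; apply: le_lt_trans h; rewrite ler_wpM2r //.
- move=> k _; have [->|xn0] := eqVneq (xs k 0) 0; first by exists 1 => //; right.
  exists (`|xs k 0| / (`|v k 0| + 1)).
    by rewrite divr_gt0 // ?normr_gt0 // ltr_wpDl.
  left; rewrite mulrAC ltr_pdivrMr ?ltr_wpDl // ltr_pM2l ?normr_gt0 //.
  by rewrite ltrDl.
have [e2 e2p He2] : exists2 e : R, 0 < e & forall y, y \in s ->
   0 < y j 0 - xs j 0 -> e < y j 0 - xs j 0.
  apply: (@finite_small R _
   (fun (y : 'cV[R]_n) (e : R) => 0 < y j 0 - xs j 0 -> e < y j 0 - xs j 0) s).
- move=> y e e' e'p e'e h /h; exact: le_lt_trans.
- move=> y _; have [h|h] := ltrP 0 (y j 0 - xs j 0).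
    by exists ((y j 0 - xs j 0) / 2); [lra | move=> _; lra].
  by exists 1 => // h'; lra.
exists (Num.min e1 e2); split; first by rewrite lt_min e1p e2p.
- apply/negP => ys; have := He2 _ ys; rewrite !mxE vj mulr1 addrAC subrr add0r.
  by rewrite lt_min e1p e2p /= => /(_ isT); rewrite ltNge ge_min lexx orbT.
- move=> k xn0; rewrite !mxE sg_pert //.
  case: (He1 k (mem_enum _ _)) => [h|h]; last by rewrite h eqxx in xn0.
  rewrite normrM (gtr0_norm); last by rewrite lt_min e1p e2p.
  apply: le_lt_trans h; rewrite ler_wpM2r // ge_min lexx //.
Qed.

Theorem lemma2p1 (R : realFieldType) (m n : nat) (A : 'M[R]_(m, n))
  (b : 'cV[R]_m) (hmn : (m < n)%N) (xs : 'cV[R]_n) (hxs : A *m xs = b)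
  (I1 : {set 'I_m}) (I2 : {set 'I_n})
  (hc1 : #|I1| = \rank A) (hc12 : #|I2| = #|I1|)
  (hns : subsq A hc12 \in unitmx)
  (hnz : forall i : 'I_n, i \in I2 -> xs i 0 != 0) :
  [/\ (exists j : 'I_n, j \notin I2 /\ xs j 0 != 0) ->
        infinitely_many (fun x : 'cV[R]_n => A *m x = b /\ same_sign x xs),
      infinitely_many (fun x : 'cV[R]_n => A *m x = b /\ same_sign_on I2 x xs)
    & (forall j : 'I_n, j \notin I2 -> xs j 0 = 0) ->
        forall x : 'cV[R]_n, A *m x = b -> same_sign x xs -> x = xs].
Proof.
pose f := fun i : 'I_#|I1| => (enum_val i : 'I_m).
pose g := fun i : 'I_#|I1| => (enum_val (cast_ord (esym hc12) i) : 'I_n).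
have gI2 : forall i, g i \in I2 by move=> i; exact: enum_valP.
have ginj : injective g.
  by move=> i1 i2 /enum_val_inj /cast_ord_inj.
pose P := mxsub f id A.
pose E := mxsub id g (1%:M : 'M[R]_n).
have hS : subsq A hc12 = P *m E.
  by rewrite mulmx_colsub mulmx1; apply/matrixP => i k; rewrite !mxE.
have Ek : forall k i, E k i = (k == g i)%:R.
  by move=> k i; rewrite !mxE.
have [D hD] : exists D : 'M[R]_(m, #|I1|), A = D *m P.
  have sPA : (P <= A)%MS by exact: rowsub_sub.
  have rP : \rank P = \rank A.
    apply/eqP; rewrite eqn_leq mxrankS //= -hc1.
    by rewrite -{1}(mxrank_unit hns) hS mxrankM_maxl.
  have : (A <= P)%MS by rewrite -(mxrank_leqif_sup sPA).2 rP.
  by case/submxP => D ->; exists D.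
have key : forall j, j \notin I2 -> exists v : 'cV[R]_n,
   [/\ v j 0 = 1, A *m v = 0 & forall k, k \notin I2 -> k != j -> v k 0 = 0].
  move=> j jI2.
  pose c : 'cV[R]_n := delta_mx j 0.
  pose w := - (invmx (subsq A hc12) *m (P *m c)).
  have Ew0 : forall k, k \notin I2 -> (E *m w) k 0 = 0.
    move=> k kI2; rewrite mxE big1 // => i _; rewrite Ek.
    by case: eqP => [kg|_]; [move: kI2; rewrite kg gI2 | rewrite mul0r].
  exists (c + E *m w); split.
  - by rewrite mxE Ew0 // !mxE !eqxx addr0.
  - rewrite hD -mulmxA mulmxDr mulmxA -hS /w mulmxN mulmxA mulmxV // mul1mx.
    by rewrite subrr mulmx0.
  - by move=> k kI2 kj; rewrite mxE Ew0 // !mxE (negbTE kj) add0r.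
have build : forall j, j \notin I2 -> forall Q : 'cV[R]_n -> Prop,
   (forall v t, A *m v = 0 -> (forall k, k \notin I2 -> k != j -> v k 0 = 0) ->
       (forall k, xs k 0 != 0 -> Num.sg ((xs + t *: v) k 0) = Num.sg (xs k 0)) ->
       Q (xs + t *: v)) ->
   infinitely_many (fun x => A *m x = b /\ Q x).
  move=> j jI2 Q HQ s.
  have [v [vj Av vz]] := key j jI2.
  have [t [_ ts tsg]] := @perturb _ _ xs v j vj s.
  exists (xs + t *: v); split => //; split; last exact: HQ.
  by rewrite mulmxDr hxs -scalemxAr Av scaler0 addr0.
split.
- case=> j [jI2 xj] .
  apply: (build j jI2) => v t Av vz sg k.
  have [xk|/sg //] := eqVneq (xs k 0) 0.
  have kI2 : k \notin I2 by apply/negP => /hnz; rewrite xk eqxx.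
  have kj : k != j by apply: contraNneq xj => <-; rewrite xk.
  by rewrite !mxE vz // mulr0 addr0.
- have : (0 < #|~: I2|)%N.
    by rewrite cardsCs setCK card_ord hc12 hc1 subn_gt0 (leq_ltn_trans (rank_leq_row A)).
  case/card_gt0P => j; rewrite in_setC => jI2.
  apply: (build j jI2) => v t Av vz sg k /hnz; exact: sg.
- move=> h0 x Ax sx.
  pose d := x - xs.
  have dz : forall k, k \notin I2 -> d k 0 = 0.
    move=> k kI2; rewrite !mxE h0 // subr0.
    by apply/eqP; rewrite -sgr_eq0 sx h0 // sgr0.
  have hd : d = E *m mxsub g id d.
    apply/matrixP => k i; rewrite (ord1 i) [RHS]mxE.
    have [kI2|kI2] := boolP (k \in I2); last first.
      rewrite dz // big1 // => i' _; rewrite Ek.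
      by case: eqP => [kg|_]; [move: kI2; rewrite kg gI2 | rewrite mul0r].
    pose i0 := cast_ord hc12 (enum_rank_in kI2 k).
    have gi0 : g i0 = k by rewrite /g /i0 cast_ordK enum_rankK_in.
    rewrite (bigD1 i0) //= big1 ?addr0.
      by rewrite Ek gi0 eqxx mul1r !mxE gi0.
    move=> i' ne; rewrite Ek; case: eqP => [kg|_]; last by rewrite mul0r.
    by move: ne; rewrite -(ginj i' i0) ?eqxx // gi0 kg.
  have Pd : P *m d = 0.
    have Ad : A *m d = 0 by rewrite mulmxBr Ax hxs subrr.
    by rewrite mul_rowsub_mx Ad; apply/matrixP => i k; rewrite !mxE.
  have d0 : mxsub g id d = 0.
    move: Pd; rewrite {1}hd mulmxA -hS => /(congr1 (mulmx (invmx (subsq A hc12)))).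
    by rewrite mulmxA mulVmx // mul1mx mulmx0.
  by apply/eqP; rewrite -subr_eq0 -/d hd d0 mulmx0.
Qed.
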